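(* Let $u$ be a symmetric decreasing function on $\mathbb{T}$, and let $h,\bar h$ be pdfs such that $\bar h$ is more focused than $h$. Then for all $r\in\mathbb{T}$, $$\int h(x-r)u(x)\,dx\le\int\bar h(x)u(x)\,dx.$$
   Context: $\mathbb{T}=\mathbb{R}/\mathbb{Z}$, identified with $[-\tfrac12,\tfrac12)$; integrals are over $\mathbb{T}$. A pdf is a nonnegative function in $L^2(\mathbb{T})$ with integral 1. A function $u$ is symmetric decreasing if $u(x)=u(-x)$ and $u(x)\ge u(y)$ for all $0\le x\le y$ (here $y\le\tfrac12$). A function $\bar h$ is more focused than $h$ if for all $z\in[0,\tfrac12]$ and all $r\in\mathbb{T}$, $\int_{r-z}^{r+z}h\le\int_{-z}^{z}\bar h$. *)

(* Defs.v *)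
From HB Require Import structures.
From mathcomp Require Import all_boot all_order all_algebra.
From mathcomp Require Import all_classical all_reals all_analysis.
Unset Printing Implicit Defensive.
Import Order.TTheory GRing.Theory Num.Theory.
Local Open Scope classical_set_scope.
Local Open Scope ring_scope.

(* T = R/Z: functions on T are 1-periodic functions R -> R;
   points of T are represented by reals in [-1/2, 1/2). *)
Definition Tset (R : realType) : set R := `[(- (1/2)) : R, 1/2[%classic.

Definition periodic1 {R : realType} (f : R -> R) : Prop :=
  forall x, f (x + 1) = f x.

Definition intT {R : realType} (f : R -> R) : \bar R :=
  (\int[(@lebesgue_measure R : set R -> \bar R)]_(x in Tset R) (f x)%:E)%E.

Definition intI {R : realType} (a b : R) (f : R -> R) : \bar R :=
  (\int[(@lebesgue_measure R : set R -> \bar R)]_(x in `[a, b]%classic) (f x)%:E)%E.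

Definition pdf {R : realType} (h : R -> R) : Prop :=
  [/\ periodic1 h,
      measurable_fun setT h,
      (forall x, 0 <= h x),
      (intT (fun x => (h x ^+ 2)%R) < +oo)%E &
      intT h = 1%E].

Definition symmetric_decreasing {R : realType} (u : R -> R) : Prop :=
  [/\ periodic1 u,
      (forall x, u x = u (- x)) &
      (forall x y, 0 <= x -> x <= y -> y <= 1/2 -> u y <= u x)].

Definition more_focused {R : realType} (hbar h : R -> R) : Prop :=
  forall z r, 0 <= z -> z <= 1/2 -> r \in Tset R ->
    (intI (r - z) (r + z) h <= intI (- z) z hbar)%E.

(* Main.v *)
From HB Require Import structures.
Require Import Defs.
From mathcomp Require Import all_boot all_order all_algebra.
From mathcomp Require Import all_classical all_reals all_analysis.
From mathcomp Require Import measurable_realfun ring lra.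
Import Order.TTheory GRing.Theory Num.Theory.
Local Open Scope classical_set_scope.
Local Open Scope ring_scope.

Definition leb {R : realType} : set R -> \bar R := (@lebesgue_measure R).

Section leb.
Context {R : realType}.
Local Open Scope ereal_scope.
Let leb0 : @leb R set0 = 0. Proof. exact: measure0. Qed.
Let leb_ge0 (A : set R) : 0 <= @leb R A. Proof. exact: measure_ge0. Qed.
Let leb_sa : semi_sigma_additive (@leb R).
Proof. exact: (@measure_semi_sigma_additive _ _ _ (@lebesgue_measure R)). Qed.
HB.instance Definition _ := isMeasure.Build _ R R (@leb R) leb0 leb_ge0 leb_sa.
End leb.

Section S.
Context {R : realType}.
Local Notation mu := (@leb R).
Local Open Scope ereal_scope.

Lemma intTE (h : R -> R) : intT h = \int[mu]_(x in Tset R) (h x)%:E.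
Proof. by []. Qed.

Lemma intIE (a b : R) (h : R -> R) : intI a b h = \int[mu]_(x in `[a, b]) (h x)%:E.
Proof. by []. Qed.

Lemma lebesgue_measure_shift (c : R) (A : set R) : measurable A ->
  pushforward (@lebesgue_measure R) ((fun x => x + c)%R : _ -> measurableTypeR R) A = (@lebesgue_measure R) A.
Proof.
move=> mA; apply/esym/lebesgue_measure_unique.
  exact: measurable_funD.
move=> mf _ [[a b]] _ <-.
change (lebesgue_measure `]a, b]%classic = lebesgue_measure ((fun x => x + c)%R @^-1` `]a, b]%classic)).
have -> : (fun x => x + c)%R @^-1` `]a, b]%classic = `](a - c)%R, (b - c)%R]%classic.
  apply/seteqP; split => x /=; rewrite !in_itv /= => /andP[h1 h2]; apply/andP; split.
  - by rewrite ltrBlDr.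
  - by rewrite lerBrDr.
  - by rewrite -ltrBlDr.
  - by rewrite -lerBrDr.
rewrite !lebesgue_measure_itv/= !lte_fin ltrD2r.
case: ifP => // _; congr (_%:E); ring.
exact: mA.
Qed.

Lemma measurable_shift (c : R) : measurable_fun [set: R] (fun x : R => x + c)%R.
Proof. exact: measurable_funD. Qed.

Lemma ge0_integral_shift (c : R) (D : set R) (f : R -> R) :
  measurable D -> measurable_fun [set: R] f -> (forall x, (0 <= f x)%R) ->
  \int[mu]_(x in (fun x => x + c)%R @^-1` D) (f (x + c)%R)%:E =
  \int[mu]_(y in D) (f y)%:E.
Proof.
move=> mD mf f0.
rewrite -(ge0_integral_pushforward (measurable_shift c) mu (f := fun y => (f y)%:E)) //.
- apply: eq_measure_integral => //=; first exact: measurable_shift.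
  move=> _ A mA _.
  change (lebesgue_measure ((fun x => x + c)%R @^-1` A) = lebesgue_measure A).
  exact: (lebesgue_measure_shift c A mA).
- apply/measurable_EFinP; exact: measurable_funS mf.
- by move=> y _; rewrite lee_fin.
Qed.

Lemma shift_itv (c a b : R) (b0 b1 : bool) :
  (fun x => x + c)%R @^-1` [set` Interval (BSide b0 (a + c)%R) (BSide b1 (b + c)%R)] =
  [set` Interval (BSide b0 a) (BSide b1 b)].
Proof.
by apply/seteqP; split => x /=; rewrite !in_itv/=; case: b0; case: b1;
  rewrite /= ?lerD2r ?ltrD2r.
Qed.

Lemma ge0_integral_shift_itv (c a b : R) (b0 b1 : bool) (f : R -> R) :
  measurable_fun [set: R] f -> (forall x, (0 <= f x)%R) ->
  \int[mu]_(x in [set` Interval (BSide b0 a) (BSide b1 b)]) (f (x + c)%R)%:E =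
  \int[mu]_(y in [set` Interval (BSide b0 (a + c)%R) (BSide b1 (b + c)%R)]) (f y)%:E.
Proof.
by move=> mf f0; rewrite -(@ge0_integral_shift c [set` Interval (BSide b0 (a + c)%R) (BSide b1 (b + c)%R)] f)// shift_itv.
Qed.

Lemma disj_itv (a b c : R) (b0 b1 b2 : bool) :
  [disjoint [set` Interval (BSide b0 a) (BSide b1 b)] &
            [set` Interval (BSide b1 b) (BSide b2 c)]].
Proof.
apply/disj_setPS => x [] /=; rewrite !in_itv/= => /andP[_ h1] /andP[h2 _].
by case: b1 h1 h2 => /= h1 h2; lra.
Qed.

Lemma periodic_int (h : R -> R) : periodic1 h -> measurable_fun setT h ->
  (forall x, (0 <= h x)%R) ->
  forall c, (0 <= c <= 1)%R ->
  \int[mu]_(x in Tset R) (h (x + c)%R)%:E = intT h.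
Proof.
move=> hp mh h0 c /andP[c0 c1].
rewrite intTE /Tset ge0_integral_shift_itv//.
have mh' : measurable_fun setT (EFin \o h).
  exact/measurable_EFinP.
rewrite (@itv_bndbnd_setU _ _ _ (BLeft (1/2)%R)); last 2 first.
- rewrite bnd_simp; lra.
- rewrite bnd_simp; lra.
rewrite ge0_integral_setU//; last 3 first.
- exact: measurable_funS mh'.
- by move=> x _; rewrite lee_fin.
- exact: disj_itv.
rewrite [in RHS](@itv_bndbnd_setU _ _ _ (BLeft (- (1/2) + c)%R)); last 2 first.
- rewrite bnd_simp; lra.
- rewrite bnd_simp; lra.
rewrite ge0_integral_setU//; last 3 first.
- exact: measurable_funS mh'.
- by move=> x _; rewrite lee_fin.
- exact: disj_itv.
rewrite addeC; congr (_ + _)%E.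
transitivity (\int[mu]_(x in `[(- (1/2))%R, (- (1/2) + c)%R[) (h (x + 1)%R)%:E); last first.
  by apply: eq_integral => x _; rewrite hp.
rewrite ge0_integral_shift_itv//.
have -> : (- (1/2) + 1 = 1/2 :> R)%R by lra.
by have -> : (- (1/2) + c + 1 = 1/2 + c :> R)%R by lra.
Qed.

Lemma inT (x : R) : x \in Tset R -> (- (1/2) <= x < 1/2)%R.
Proof. by move/set_mem; rewrite /Tset /= in_itv. Qed.

Lemma Tin (x : R) : (- (1/2) <= x < 1/2)%R -> x \in Tset R.
Proof. by move=> H; apply/mem_set; rewrite /Tset /= in_itv. Qed.

Lemma TsetE (x : R) : Tset R x = (- (1/2) <= x < 1/2)%R.
Proof. by rewrite /Tset /= in_itv. Qed.

Lemma focus_shift (h hbar : R -> R) : pdf h -> more_focused hbar h ->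
  forall r, r \in Tset R -> forall z, (0 <= z)%R -> (z <= 1/2)%R ->
  \int[mu]_(x in `[(- z)%R, z]) (h (x - r)%R)%:E <=
  \int[mu]_(x in `[(- z)%R, z]) (hbar x)%:E.
Proof.
move=> [hp mh h0 _ _] hf r rT z z0 z12.
have [c [cT hc]] : exists c, c \in Tset R /\ forall x, h (x - r)%R = h (x + c)%R.
  move: rT => /inT /andP[r1 r2].
  case: (r =P - (1/2))%R => [->|rn].
  - exists (- (1/2))%R; split; first by apply/Tin/andP; split; lra.
    by move=> x; rewrite -[RHS]hp; congr h; lra.
  - exists (- r)%R; split; last by [].
    apply/Tin/andP; split; first lra.
    have : (- (1/2) < r)%R by rewrite lt_neqAle r1 andbT; apply/eqP => e; apply: rn; rewrite e.
    lra.
under eq_integral do rewrite hc.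
rewrite ge0_integral_shift_itv//.
have := hf z c z0 z12 cT; rewrite !intIE.
by rewrite (addrC (- z)%R) (addrC z c).
Qed.

Lemma superlevel (v : R -> R)
  (hv : forall x y, Tset R x -> Tset R y -> (`|y| <= `|x|)%R -> (v x <= v y)%R)
  (t : R) :
  (Tset R `&` [set x | (t < v x)%R]) = set0 \/
  exists z : R, [/\ (0 <= z)%R, (z <= 1/2)%R,
    `](- z)%R, z[ `<=` (Tset R `&` [set x | (t < v x)%R]) &
    (Tset R `&` [set x | (t < v x)%R]) `<=` `[(- z)%R, z]].
Proof.
set S := (Tset R `&` _).
have [->|/set0P [x0 Sx0]] := eqVneq S set0; first by left.
right.
pose A := (fun x : R => `|x|%R) @` S.
have Tb : forall x, Tset R x -> (`|x| <= 1/2)%R.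
  by move=> x; rewrite TsetE ler_norml => /andP[h1 h2]; rewrite h1 ltW.
have ubA : ubound A (1/2)%R by move=> _ [x [Tx _] <-]; exact: Tb.
have A0 : A !=set0 by exists `|x0|%R, x0.
have hsA : has_sup A by split => //; exists (1/2)%R.
exists (sup A); split.
- by apply: le_trans (normr_ge0 x0) _; apply: sup_upper_bound => //; exists x0.
- exact: ge_sup.
- move=> y /=; rewrite in_itv /= => /andP[y1 y2].
  have yz : (`|y| < sup A)%R by rewrite ltr_norml y1 y2.
  have e0 : (0 < sup A - `|y|)%R by rewrite subr_gt0.
  have [_ [x Sx <-] hx] := sup_adherent e0 hsA.
  rewrite opprB addrC subrK in hx.
  have Ty : Tset R y.
    have y12 : (`|y| < 1/2)%R := lt_le_trans hx (Tb x Sx.1).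
    move: y12; rewrite TsetE ltr_norml => /andP[h1 h2].
    by rewrite h2 ltW.
  split => //=; apply: lt_le_trans Sx.2 _; apply: hv => //; first exact: Sx.1.
  exact: ltW.
- move=> x Sx /=; rewrite in_itv /= -ler_norml.
  by apply: sup_upper_bound => //; exists x.
Qed.

Lemma set_ineq (g hbar : R -> R) (S : set R) :
  measurable S -> measurable_fun setT g -> measurable_fun setT hbar ->
  (forall x, (0 <= g x)%R) -> (forall x, (0 <= hbar x)%R) ->
  (forall z, (0 <= z)%R -> (z <= 1/2)%R ->
    \int[mu]_(x in `[(- z)%R, z]) (g x)%:E <= \int[mu]_(x in `[(- z)%R, z]) (hbar x)%:E) ->
  (S = set0 \/ exists z : R, [/\ (0 <= z)%R, (z <= 1/2)%R,
    `](- z)%R, z[ `<=` S & S `<=` `[(- z)%R, z]]) ->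
  \int[mu]_(x in S) (g x)%:E <= \int[mu]_(x in S) (hbar x)%:E.
Proof.
move=> mS mg mh g0 h0 hgh.
case => [->|[z [z0 z12 sub1 sub2]]]; first by rewrite !integral_set0.
have mg' : measurable_fun setT (EFin \o g) by exact/measurable_EFinP.
have mh' : measurable_fun setT (EFin \o hbar) by exact/measurable_EFinP.
apply: le_trans (ge0_subset_integral _ _ _ _ _ sub2) _ => //.
- exact: measurable_funS mg'.
- by move=> x _; rewrite lee_fin.
apply: le_trans (hgh z z0 z12) _.
have mN : measurable ([set (- z)%R] `|` [set z]) by apply: measurableU.
have N0 : mu ([set (- z)%R] `|` [set z]) = 0.
  apply/eqP; rewrite eq_le measure_ge0 andbT.
  apply: le_trans (measureU2 _ _ _) _ => //.
  have L1 (a : R) : mu [set a] = 0 by exact: lebesgue_measure_set1.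
  change (mu [set (- z)%R] + mu [set z] <= 0); by rewrite !L1 adde0.
rewrite (ge0_negligible_integral (D := `[(- z)%R, z]) mN) //; last 2 first.
- exact: measurable_funS mh'.
- by move=> x _; rewrite lee_fin.
apply: ge0_subset_integral => //.
- apply: measurableD => //.
- exact: measurable_funS mh'.
- by move=> x _; rewrite lee_fin.
move=> x [/=]; rewrite in_itv /= => /andP[x1 x2] xN.
apply: sub1 => /=; rewrite in_itv /=.
rewrite !lt_neqAle x1 x2 !andbT; apply/andP; split; apply/eqP => e; apply: xN.
- by left.
- by right.
Qed.

Definition clampa (x : R) : R := if (x <= 0)%R then 0%R else if (x <= 1/2)%R then x else (1/2)%R.

Lemma clampa_bnd x : (0 <= clampa x)%R && (clampa x <= 1/2)%R.
Proof. rewrite /clampa; case: (lerP x 0) => h; case: (lerP x (1/2)) => h'; apply/andP; split; lra. Qed.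

Lemma clampa_mono x y : (x <= y)%R -> (clampa x <= clampa y)%R.
Proof.
rewrite /clampa => xy; case: (lerP x 0) => h1; case: (lerP y 0) => h2;
  case: (lerP x (1/2)) => h3; case: (lerP y (1/2)) => h4; lra.
Qed.

Lemma clampa_id x : (0 <= x)%R -> (x <= 1/2)%R -> clampa x = x.
Proof. rewrite /clampa => h1 h2; case: (lerP x 0) => h; case: (lerP x (1/2)) => h'; lra. Qed.

Lemma clampa_neg x : (x <= 0)%R -> clampa x = 0%R.
Proof. by rewrite /clampa => ->. Qed.

Definition Uf (u : R -> R) : R -> R :=
  (fun x => u (clampa x)) \min (fun x => u (clampa (- x))).

Lemma Uf_measurable u : symmetric_decreasing u -> measurable_fun setT (Uf u).
Proof.
move=> [up us ud]; apply: measurable_minr.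
- apply: nonincreasing_measurable => // x y xy.
  have /andP[h1 h2] := clampa_bnd y; have /andP[h3 h4] := clampa_bnd x.
  apply: ud => //; exact: clampa_mono.
- apply: nondecreasing_measurable => // x y xy.
  have /andP[h1 h2] := clampa_bnd (- x); have /andP[h3 h4] := clampa_bnd (- y).
  apply: ud => //; apply: clampa_mono; lra.
Qed.

Lemma Uf_eq u : symmetric_decreasing u -> forall x, (`|x| <= 1/2)%R -> Uf u x = u x.
Proof.
move=> [up us ud] x; rewrite ler_norml => /andP[x1 x2].
rewrite /Uf /=; case: (lerP 0 x) => x0.
- rewrite clampa_id // clampa_neg; last lra.
  by apply/min_idPl; apply: ud => //; lra.
- rewrite clampa_neg; last lra.
  rewrite clampa_id; [|lra|lra].
  by rewrite [in RHS]us; apply/min_idPr; apply: ud => //; lra.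
Qed.

Definition ind (c y : R) : R := if (c < y)%R then 1%R else 0%R.

Definition sn (e : R) (n : nat) (y : R) : R :=
  (e * \sum_(k < n) ind ((k.+1)%:R * e) y)%R.

Lemma ind_ge0 c y : (0 <= ind c y)%R.
Proof. by rewrite /ind; case: ifP. Qed.

Lemma ind_le1 c y : (ind c y <= 1)%R.
Proof. by rewrite /ind; case: ifP. Qed.

Lemma ind_mono c x y : (x <= y)%R -> (ind c x <= ind c y)%R.
Proof.
rewrite /ind => xy; case: (ltrP c x) => h.
- by rewrite ifT //; exact: lt_le_trans h xy.
- by case: ifP.
Qed.

Lemma snS e n y : sn e n.+1 y = (sn e n y + e * ind (n.+1%:R * e) y)%R.
Proof. by rewrite /sn big_ord_recr /= mulrDr. Qed.

Lemma sn_ge0 e n y : (0 <= e)%R -> (0 <= sn e n y)%R.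
Proof.
move=> e0; rewrite /sn; apply: mulr_ge0 => //; apply: sumr_ge0 => k _; exact: ind_ge0.
Qed.

Lemma sn_le e n y : (0 <= e)%R -> (sn e n y <= n%:R * e)%R.
Proof.
move=> e0; elim: n => [|n IH]; first by rewrite /sn big_ord0 mulr0 mul0r.
rewrite snS mulrSr mulrDl mul1r; apply: lerD => //.
by rewrite -[X in (_ <= X)%R]mulr1; apply: ler_wpM2l => //; exact: ind_le1.
Qed.

Lemma sn_full e n y : (0 <= e)%R -> (n%:R * e < y)%R -> sn e n y = (n%:R * e)%R.
Proof.
move=> e0; elim: n => [|n IH] h; first by rewrite /sn big_ord0 mulr0 mul0r.
rewrite snS IH; last first.
  apply: le_lt_trans h; apply: ler_wpM2r => //; rewrite ler_nat; exact: leqnSn.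
by rewrite /ind ifT // mulr1 mulrSr mulrDl mul1r.
Qed.

Lemma sn_le_y e n y : (0 <= e)%R -> (0 <= y)%R -> (sn e n y <= y)%R.
Proof.
move=> e0 y0; elim: n => [|n IH]; first by rewrite /sn big_ord0 mulr0.
rewrite snS /ind; case: ifPn => h.
- apply: le_trans (ltW h); rewrite mulr1 mulrSr mulrDl mul1r lerD2r.
  exact: sn_le.
- by rewrite mulr0 addr0.
Qed.

Lemma sn_ge e n y : (0 <= e)%R -> (y <= n%:R * e)%R -> (y <= sn e n y + e)%R.
Proof.
move=> e0; elim: n => [|n IH] h.
  by rewrite /sn big_ord0 mulr0 add0r; apply: le_trans h _; rewrite mul0r.
have snm : (sn e n y <= sn e n.+1 y)%R.
  by rewrite snS lerDl; apply: mulr_ge0 => //; exact: ind_ge0.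
case: (lerP y (n%:R * e)) => hy.
- by apply: le_trans (IH hy) _; rewrite lerD2r.
- apply: le_trans h _; apply: le_trans (_ : sn e n y + e <= _)%R; last by rewrite lerD2r.
  by rewrite sn_full // mulrSr mulrDl mul1r.
Qed.

Lemma sn_mono e n x y : (0 <= e)%R -> (x <= y)%R -> (sn e n x <= sn e n y)%R.
Proof.
move=> e0 xy; rewrite /sn; apply: ler_wpM2l => //; apply: ler_sum => k _.
exact: ind_mono.
Qed.

Lemma measurable_ind c : measurable_fun setT (ind c).
Proof. apply: nondecreasing_measurable => // x y; exact: ind_mono. Qed.

Lemma sn_intE (f W : R -> R) e n : (0 <= e)%R ->
  measurable_fun setT f -> measurable_fun setT W -> (forall x, (0 <= f x)%R) ->
  \int[mu]_(x in Tset R) (f x * sn e n (W x))%:E =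
  \sum_(k < n) (e%:E * \int[mu]_(x in Tset R `&` [set x | ((k.+1)%:R * e < W x)%R]) (f x)%:E).
Proof.
move=> e0 mf mW f0.
have mT : measurable (Tset R) by rewrite /Tset; exact: measurable_itv.
have mI c : measurable_fun setT (fun x => f x * ind c (W x))%R.
  apply: measurable_funM => //; exact: (measurableT_comp (measurable_ind c) mW).
transitivity (\int[mu]_(x in Tset R)
   (\sum_(k < n) (e * (f x * ind ((k.+1)%:R * e) (W x)))%:E)).
  apply: eq_integral => x _; rewrite sumEFin; congr (_%:E).
  by rewrite /sn mulrCA !mulr_sumr.
rewrite ge0_integral_sum //; last 2 first.
- move=> k; apply/measurable_EFinP; apply: measurable_funM => //.
  exact: measurable_funS (mI _).
- move=> k x _; rewrite lee_fin; apply: mulr_ge0 => //; apply: mulr_ge0 => //.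
  exact: ind_ge0.
apply: eq_bigr => k _.
under eq_integral do rewrite EFinM.
rewrite ge0_integralZl //; last 2 first.
- apply/measurable_EFinP; exact: measurable_funS (mI _).
- by move=> x _; rewrite lee_fin; apply: mulr_ge0 => //; exact: ind_ge0.
congr (_ * _).
rewrite __deprecated__integral_setI_indic //; last first.
  have -> : [set x | ((k.+1)%:R * e < W x)%R] = setT `&` W @^-1` `]((k.+1)%:R * e)%R, +oo[%classic.
    by apply/seteqP; split => x /=; rewrite in_itv/= andbT => // -[].
  exact: (mW measurableT _ (measurable_itv _)).
apply: eq_integral => x _; rewrite -EFinM indicE /ind.
case: ifPn => h.
- by rewrite mem_set.
- by rewrite memNset //=; exact/negP.
Qed.

Lemma measurableT_Tset : measurable (Tset R).
Proof. rewrite /Tset; exact: measurable_itv. Qed.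

Lemma stepA (f W v : R -> R) (m D : R) :
  measurable_fun setT f -> measurable_fun setT W -> (forall x, (0 <= f x)%R) ->
  (0 <= D)%R ->
  (forall x, Tset R x -> v x = (W x + m)%R /\ (0 <= W x)%R /\ (W x <= D)%R) ->
  \int[mu]_(x in Tset R) (f x)%:E = 1 ->
  \int[mu]_(x in Tset R) (f x * v x)%:E =
  \int[mu]_(x in Tset R) (f x * W x)%:E + m%:E.
Proof.
move=> mf mW f0 D0 hv hint.
have mT := measurableT_Tset.
have mf' : measurable_fun (Tset R) (EFin \o f).
  by apply/measurable_EFinP; exact: measurable_funS mf.
have mfW : measurable_fun (Tset R) (fun x => (f x * W x)%:E).
  apply/measurable_EFinP; apply: measurable_funM.
  - exact: measurable_funS mf.
  - exact: measurable_funS mW.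
have fint : mu.-integrable (Tset R) (EFin \o f).
  apply/integrableP; split => //.
  rewrite (eq_integral (fun x => (f x)%:E)); first by rewrite hint ltry.
  by move=> x _ /=; rewrite ger0_norm.
have fWint : mu.-integrable (Tset R) (fun x => (f x * W x)%:E).
  apply/integrableP; split => //.
  apply: (le_lt_trans (_ : _ <= \int[mu]_(x in Tset R) (D%:E * (f x)%:E))).
    apply: ge0_le_integral => //.
    - apply: measurableT_comp => //.
    - apply: emeasurable_funM => //; exact: measurable_cst.
    - move=> x Tx; have [_ [W0 WD]] := hv x Tx.
      rewrite gee0_abs; last by rewrite lee_fin mulr_ge0.
      by rewrite -EFinM lee_fin mulrC; apply: ler_wpM2r.
  rewrite ge0_integralZl //; last by move=> x _; rewrite lee_fin.
  by rewrite hint mule1 ltry.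
transitivity (\int[mu]_(x in Tset R) ((f x * W x)%:E + m%:E * (f x)%:E)).
  apply: eq_integral => x /set_mem Tx; have [-> _] := hv x Tx.
  by rewrite -EFinM -EFinD mulrDr mulrC (mulrC m).
rewrite integralD //; last exact: integrableZl.
by rewrite integralZl // hint mule1.
Qed.

Lemma stepB (g hb W : R -> R) (D : R) :
  measurable_fun setT g -> measurable_fun setT hb -> measurable_fun setT W ->
  (forall x, (0 <= g x)%R) -> (forall x, (0 <= hb x)%R) ->
  (forall x, Tset R x -> (0 <= W x)%R /\ (W x <= D)%R) ->
  \int[mu]_(x in Tset R) (g x)%:E = 1 ->
  (forall c, \int[mu]_(x in Tset R `&` [set x | (c < W x)%R]) (g x)%:E <=
             \int[mu]_(x in Tset R `&` [set x | (c < W x)%R]) (hb x)%:E) ->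
  \int[mu]_(x in Tset R) (g x * W x)%:E <= \int[mu]_(x in Tset R) (hb x * W x)%:E.
Proof.
move=> mg mhb mW g0 hb0 hW gint hc.
have mT := measurableT_Tset.
apply/lee_addgt0Pr => e e0.
pose n := (Num.truncn (D / e)).+1.
have Dn : (D <= n%:R * e)%R.
  rewrite -ler_pdivrMr //; exact/ltW/truncnS_gt.
have msn : measurable_fun setT (fun x => sn e n (W x)).
  apply: (measurableT_comp _ mW); apply: nondecreasing_measurable => // x y xy.
  by apply: sn_mono => //; exact: ltW.
have mgs : measurable_fun (Tset R) (fun x => (g x * sn e n (W x))%:E).
  apply/measurable_EFinP; apply: measurable_funM; [exact: measurable_funS mg|exact: measurable_funS msn].
have mhs : measurable_fun (Tset R) (fun x => (hb x * sn e n (W x))%:E).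
  apply/measurable_EFinP; apply: measurable_funM; [exact: measurable_funS mhb|exact: measurable_funS msn].
apply: (le_trans (_ : _ <= \int[mu]_(x in Tset R) (g x * sn e n (W x))%:E + e%:E)).
  apply: (le_trans (_ : _ <= \int[mu]_(x in Tset R)
    ((g x * sn e n (W x))%:E + e%:E * (g x)%:E))).
    apply: ge0_le_integral => //.
    - by move=> x Tx; rewrite lee_fin mulr_ge0 //; have [] := hW x Tx.
    - apply/measurable_EFinP; apply: measurable_funM; [exact: measurable_funS mg|exact: measurable_funS mW].
    - apply: emeasurable_funD => //; apply: emeasurable_funM => //.
      apply/measurable_EFinP; exact: measurable_funS mg.
    - move=> x Tx; rewrite -EFinM -EFinD lee_fin (mulrC e) -mulrDr ler_wpM2l //.
      have [W0 WD] := hW x Tx; apply: sn_ge; first exact: ltW.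
      exact: le_trans WD Dn.
  rewrite ge0_integralD //; last 3 first.
  - by move=> x _; rewrite lee_fin mulr_ge0 //; exact: sn_ge0 (ltW e0).
  - by move=> x _; rewrite -EFinM lee_fin mulr_ge0 // ltW.
  - apply: emeasurable_funM => //; apply/measurable_EFinP; exact: measurable_funS mg.
  rewrite ge0_integralZl //; last 3 first.
  - apply/measurable_EFinP; exact: measurable_funS mg.
  - by move=> x _; rewrite lee_fin.
  - by rewrite lee_fin ltW.
  by rewrite gint mule1.
apply: leeD2r.
rewrite sn_intE //; last exact: ltW.
apply: (le_trans (_ : _ <= \int[mu]_(x in Tset R) (hb x * sn e n (W x))%:E)).
  rewrite sn_intE //; last exact: ltW.
  apply: lee_sum => k _; apply: lee_wpmul2l; first by rewrite lee_fin ltW.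
  exact: hc.
apply: ge0_le_integral => //.
- by move=> x Tx; rewrite lee_fin mulr_ge0 //; have [W0 _] := hW x Tx; exact: sn_ge0 (ltW e0).
- apply/measurable_EFinP; apply: measurable_funM; [exact: measurable_funS mhb|exact: measurable_funS mW].
- move=> x Tx; rewrite lee_fin ler_wpM2l //; have [W0 _] := hW x Tx.
  exact: sn_le_y (ltW e0) W0.
Qed.
End S.

Theorem lemma2p13 (R : realType) (u h hbar : R -> R) :
  symmetric_decreasing u -> pdf h -> pdf hbar -> more_focused hbar h ->
  forall r : R, r \in Tset R ->
    (intT (fun x => (h (x - r) * u x)%R) <= intT (fun x => (hbar x * u x)%R))%E.
Proof.
move=> usd hpdf hbpdf hf r rT.
have [up us ud] := usd.
have [hp mh h0 _ hint] := hpdf.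
have [hbp mhb hb0 _ hbint] := hbpdf.
have mg : measurable_fun setT (fun x : R => h (x - r)).
  exact: measurableT_comp mh (measurable_shift (- r)).
have g0 : forall x, (0 <= h (x - r))%R by move=> x; exact: h0.
have gint : (\int[@leb R]_(x in Tset R) (h (x - r))%:E = 1)%E.
  move: (rT) => /inT /andP[r1 r2].
  pose c := if (r <= 0)%R then (- r)%R else (1 - r)%R.
  have hc : forall x, h (x - r) = h (x + c).
    move=> x; rewrite /c; case: ifP => _ //.
    by rewrite -[LHS]hp; congr h; ring.
  rewrite (eq_integral (fun x : R => (h (x + c))%:E)); last by move=> x _; rewrite hc.
  rewrite periodic_int // /c; case: ifP => h1; apply/andP; split; lra.
have hbint' : (\int[@leb R]_(x in Tset R) (hbar x)%:E = 1)%E by rewrite -intTE.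
pose m := u (1/2); pose M := u 0.
have mW : measurable_fun setT (fun x : R => Uf u x - m)%R.
  apply: measurable_funB; [exact: Uf_measurable|exact: measurable_cst].
have Tb : forall x, Tset R x -> (`|x| <= 1/2)%R.
  by move=> x; rewrite TsetE ler_norml => /andP[h1 h2]; rewrite h1 ltW.
have uabs : forall x, u x = u `|x|.
  move=> x; case: (lerP 0 x) => x0; first by rewrite ger0_norm.
  by rewrite ltr0_norm // -us.
have hW : forall x, Tset R x -> u x = ((Uf u x - m) + m)%R /\
    (0 <= Uf u x - m)%R /\ (Uf u x - m <= M - m)%R.
  move=> x Tx; have xa := Tb x Tx.
  rewrite Uf_eq // subrK; split => //; rewrite uabs; split.
  - rewrite subr_ge0; apply: ud => //; exact: normr_ge0.
  - rewrite lerD2r; apply: ud => //; exact: normr_ge0.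
have D0 : (0 <= M - m)%R by rewrite subr_ge0; apply: ud => //; lra.
have hv : forall x y, Tset R x -> Tset R y -> (`|y| <= `|x|)%R ->
    ((Uf u x - m) <= (Uf u y - m))%R.
  move=> x y Tx Ty yx; rewrite lerD2r !Uf_eq ?Tb // (uabs x) (uabs y).
  by apply: ud; [exact: normr_ge0 | exact: yx | exact: Tb].
have hc : forall c,
    (\int[@leb R]_(x in Tset R `&` [set x | (c < Uf u x - m)%R]) (h (x - r))%:E <=
    \int[@leb R]_(x in Tset R `&` [set x | (c < Uf u x - m)%R]) (hbar x)%:E)%E.
  move=> c; apply: set_ineq => //.
  - apply: measurableI; first exact: measurableT_Tset.
    have -> : [set x | (c < Uf u x - m)%R] = setT `&` (fun x : R => Uf u x - m)%R @^-1` `]c, +oo[%classic.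
      by apply/seteqP; split => x /=; rewrite in_itv/= andbT => // -[].
    exact: (mW measurableT _ (measurable_itv _)).
  - by move=> z z0 z12; exact: (@focus_shift R h hbar hpdf hf r rT z z0 z12).
  - exact: superlevel.
rewrite !intTE.
rewrite (@stepA R (fun x : R => h (x - r)) (fun x : R => Uf u x - m)%R u m (M - m)) //.
rewrite (@stepA R hbar (fun x : R => Uf u x - m)%R u m (M - m)) //.
apply: leeD2r.
apply: (@stepB R (fun x : R => h (x - r)) hbar (fun x : R => Uf u x - m)%R (M - m)) => //.
by move=> x Tx; have [_ []] := hW x Tx.
Qed.
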